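(* Let $G$ be a signed cyclic graph and let $D_G$ be one of the virtual link diagrams associated with $G$ via the medial construction. Then $F[G](A,B,d)=\langle D_G\rangle(A,B,d)$.
   Context: A signed cyclic graph is a finite graph with a cyclic ordering of half-edges at each vertex (equivalently an orientable ribbon graph $\mathbf{G}_r$: vertex discs with edge ribbons attached in the given cyclic order) and a sign $\pm$ on each edge. Medial construction: embed $G$ cellularly in a closed oriented surface, place a real crossing at the midpoint of each edge $e$ and join crossings around faces; for positive $e$ the $B$-smoothing of the crossing separates the sides along $e$ (following the vertex boundaries) and the $A$-smoothing connects across $e$, for negative $e$ the roles are exchanged. Generically immersing in the plane with immersion artefacts as virtual crossings gives the virtual link diagrams associated with $G$. Bracket polynomial: for a virtual link diagram $D$, $\langle D\rangle(A,B,d)=\sum_{\sigma}A^{\alpha(\sigma)}B^{\beta(\sigma)}d^{|\sigma|-1}$, the sum over all states $\sigma$ (choices of $A$- or $B$-smoothing at every real crossing, virtual crossings left as is), $\alpha(\sigma),\beta(\sigma)$ the numbers of $A$- and $B$-smoothings, $|\sigma|$ the number of closed curves. The polynomial $F[G]$: edges may be ''marked''. For an edge $e$, $G-e$ deletes $e$ and $G(\bar e)$ keeps $e$ and marks it. Then $F[G]=B\,F[G-e]+A\,F[G(\bar e)]$ if $e$ is positive and $F[G]=A\,F[G-e]+B\,F[G(\bar e)]$ if $e$ is negative (applied to unmarked edges); and if $H$ is a spanning subgraph of $G$ (all vertices, a subset of edges with the induced cyclic order) all of whose edges are marked, $F[H]=d^{bc(H)-1}$, where $bc(H)$ is the number of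 boundary components of the ribbon graph $\mathbf{H}_r$ of $H$. *)

(* Defs.v *)
From mathcomp Require Import all_boot all_order all_algebra all_fingroup.
Set Implicit Arguments. Unset Strict Implicit. Unset Printing Implicit Defensive.
Import GRing.Theory.
Local Open Scope ring_scope.

(** * Signed cyclic graphs (orientable ribbon graphs given by rotation systems)

    Vertices [V], edges [E]; the half-edges are [E * bool] ((e,b) is the end
    [b] of edge [e]), [ends h] is the vertex incident to half-edge [h],
    [rot] is the cyclic (counterclockwise) successor of a half-edge around its
    vertex, and [sgn e = true] iff the edge [e] is positive.  Loops and
    multiple edges are allowed. *)

Section SignedCyclicGraph.
Variables (V E : finType) (ends : E * bool -> V) (rot : {perm E * bool}).

Definition is_rotation : Prop :=
  forall h h' : E * bool, (ends h == ends h') = fconnect rot h h'.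

Definition flip (h : E * bool) : E * bool := (h.1, ~~ h.2).

(** Induced cyclic order on the spanning subgraph with edge set [S]: the next
    half-edge (in the rotation at the vertex) whose edge belongs to [S]. *)
Definition rot_next (S : {set E}) (h : E * bool) : E * bool :=
  let l := [seq (rot ^+ n.+1)%g h | n <- iota 0 #|{: E * bool}|] in
  nth h l (find (fun x : E * bool => x.1 \in S) l).

(** boundary-tracing permutation of the ribbon subgraph [S] *)
Definition face_step (S : {set E}) (h : E * bool) : E * bool :=
  rot_next S (flip h).

(** number of boundary components of the ribbon graph of the spanning
    subgraph with edge set [S]: boundary cycles through half-edges of [S],
    plus one boundary circle for every vertex isolated in [S]. *)
Definition bc (S : {set E}) : nat :=
  #|[set [set y | fconnect (face_step S) x y] | x in [set h : E * bool | h.1 \in S]]|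
  + #|[set v : V | [forall h : E * bool, (h.1 \in S) ==> (ends h != v)]]|.

(** The polynomial F[G], computed by the deletion / marking recursion,
    applied to the unmarked edges in the order [enum E].  [S] is the current
    set of (not deleted) edges; edges of [S] not in [todo] are marked. *)
Variables (sgn : E -> bool) (R : comUnitRingType) (A B d : R).

Fixpoint Frec (S : {set E}) (todo : seq E) : R :=
  match todo with
  | [::] => d ^ ((bc S)%:Z - 1)
  | e :: t =>
      if sgn e then B * Frec (S :\ e) t + A * Frec S t
      else A * Frec (S :\ e) t + B * Frec S t
  end.

Definition Fpoly : R := Frec [set: E] (enum E).

End SignedCyclicGraph.

(** * Virtual link diagrams (Gauss data)

    A virtual link diagram is represented by its real crossings [C], at each
    crossing the four endpoints [(c, i)], [i : 'I_4], numbered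
    counterclockwise so that [0] and [2] are the ends of the over-strand,
    the arcs of the diagram as a matching [arc] of these endpoints
    (running through virtual crossings, which are forgotten), and a number
    [nfree] of closed components without real crossings. *)

Section Bracket.
Variables (C : finType) (arc : C * 'I_4 -> C * 'I_4) (nfree : nat).

(** the smoothing at a crossing: [true] = A-smoothing, joining the
    A-regions (those swept by turning the over-strand counterclockwise,
    i.e. between endpoints 0,1 and between 2,3): arcs {1,2},{3,0};
    [false] = B-smoothing: arcs {0,1},{2,3}. *)
Definition smooth_partner (a : bool) (i : 'I_4) : 'I_4 :=
  if a then @inord 3 ((3 - i)%N) else @inord 3 ((i + (if odd i then 3 else 1)) %% 4)%N.

Definition state_rel (s : {ffun C -> bool}) : rel (C * 'I_4) :=
  fun x y =>
    [|| arc x == y, arc y == x,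
        y == (x.1, smooth_partner (s x.1) x.2) | x == (y.1, smooth_partner (s y.1) y.2)].

Definition ncurves (s : {ffun C -> bool}) : nat :=
  #|[set [set y | connect (state_rel s) x y] | x : C * 'I_4]| + nfree.

Variables (R : comUnitRingType) (A B d : R).

Definition bracket : R :=
  \sum_(s : {ffun C -> bool})
     A ^+ #|[set c | s c]| * B ^+ #|[set c | ~~ s c]| * d ^ ((ncurves s)%:Z - 1).

End Bracket.

(** * The medial construction

    Crossing of the medial diagram = edge [e] of [G].  With [h = (e,false)]
    (at vertex v) and [h' = (e,true)] (at vertex w), the four arcs leaving
    the crossing go to the corners next to the half-edges; [(h, true)] is
    the side towards the corner (h, rot h) ("after" h) and [(h, false)] the
    side towards the corner (rot^-1 h, h) ("before" h).  Counterclockwise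
    around the midpoint of [e] these are
      p0 = (h',before), p1 = (h,after), p2 = (h,before), p3 = (h',after).
    The corner (h, rot h) gives an arc from (h,after) to (rot h, before).
    For a negative edge the over-strand is {p0,p2}; then the A-smoothing
    {p1,p2},{p3,p0} follows the vertex boundaries (separates the two sides of
    e) and the B-smoothing {p0,p1},{p2,p3} runs along the sides of e
    (connects across e).  For a positive edge the roles are exchanged:
    the over-strand is {p1,p3} (labels shifted by one). *)

Section Medial.
Variables (V E : finType) (ends : E * bool -> V) (rot : {perm E * bool})
  (sgn : E -> bool).

Definition mshift (e : E) : nat := if sgn e then 1 else 0.

Definition pos_of (j : nat) (e : E) : (E * bool) * bool :=
  match j with
  | 0 => ((e, true), false)
  | 1 => ((e, false), true)
  | 2 => ((e, false), false)
  | _ => ((e, true), true)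
  end.

Definition pidx (b s : bool) : nat :=
  match b, s with
  | true, false => 0 | false, true => 1 | false, false => 2 | true, true => 3
  end.

Definition mlab (x : E * 'I_4) : (E * bool) * bool :=
  pos_of ((x.2 + mshift x.1) %% 4) x.1.

Definition munlab (p : (E * bool) * bool) : E * 'I_4 :=
  (p.1.1, @inord 3 ((pidx p.1.2 p.2 + 4 - mshift p.1.1) %% 4)).

Definition medial_arc (x : E * 'I_4) : E * 'I_4 :=
  let p := mlab x in
  if p.2 then munlab (rot p.1, false) else munlab ((rot^-1)%g p.1, true).

(** one free circle for each isolated vertex *)
Definition medial_nfree : nat := #|[set v : V | [forall h : E * bool, ends h != v]]|.

(** [D = (C, arc, nfree)] is a virtual link diagram associated with G: up to
    renaming the crossings (a bijection with the edges of G) and choosing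
    which over-strand end is labelled 0, its Gauss data is the medial one. *)
Definition associated (C : finType) (arc : C * 'I_4 -> C * 'I_4) (nfree : nat)
  : Prop :=
  nfree = medial_nfree /\
  exists (phi : C -> E) (fl : C -> bool),
    bijective phi /\
    let tr (x : C * 'I_4) : E * 'I_4 :=
      (phi x.1, @inord 3 ((x.2 + (if fl x.1 then 2 else 0)) %% 4)) in
    forall x, medial_arc (tr x) = tr (arc x).

End Medial.

(* Main.v *)
Require Import Defs.
From mathcomp Require Import all_boot all_order all_algebra all_fingroup.
Set Implicit Arguments. Unset Strict Implicit. Unset Printing Implicit Defensive.

Section Graph.
Variables (V E : finType) (ends : E * bool -> V) (rot : {perm E * bool}).
Hypothesis Hrot : is_rotation ends rot.
Variable K : {set E}.

Definition inK (h : E * bool) := h.1 \in K.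
Definition firsthit h m := inK ((rot ^+ m.+1)%g h) /\ forall j, j < m -> ~~ inK ((rot ^+ j.+1)%g h).
Definition hasK h := [exists g, inK g && (ends g == ends h)].

Lemma ends_rot h : ends (rot h) = ends h.
Proof. by apply/esym/eqP; rewrite Hrot fconnect1. Qed.

Lemma ends_rotX n h : ends ((rot ^+ n)%g h) = ends h.
Proof. by elim: n => [|n IH]; rewrite ?expg0 ?perm1 // expgSr permM ends_rot. Qed.

Lemma ends_rotV h : ends ((rot^-1)%g h) = ends h.
Proof. by rewrite -{2}(permKV rot h) ends_rot. Qed.

Lemma rotXS n h : (rot ^+ n)%g (rot h) = (rot ^+ n.+1)%g h.
Proof. by rewrite !permX iterSr. Qed.

Lemma firsthit_uniq h m m' : firsthit h m -> firsthit h m' -> m = m'.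
Proof.
case=> H1 H2 [H1' H2']; case: (ltngtP m m') => // lt.
  by move: (H2' _ lt); rewrite H1.
by move: (H2 _ lt); rewrite H1'.
Qed.

Lemma rot_next_ex h : hasK h ->
  exists m, [/\ m < #|{: E * bool}|, firsthit h m & rot_next rot K h = (rot ^+ m.+1)%g h].
Proof.
case/existsP=> g /andP [gK /eqP eg].
have cg : fconnect rot h g by rewrite -Hrot eg.
have crg : fconnect rot (rot h) g.
  apply: connect_trans cg; rewrite fconnect_sym; [exact: fconnect1 | exact: perm_inj].
move: crg; rewrite fconnect_orbit /orbit => /trajectP [i lti ei].
have liN : i < #|{: E * bool}| by apply: leq_trans lti (max_card _).
rewrite /rot_next; set l := [seq _ | n <- _]; set P := fun x : E * bool => _.
have sl : size l = #|{: E * bool}| by rewrite size_map size_iota.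
have hasl : has P l.
  apply/hasP; exists ((rot ^+ i.+1)%g h).
    by apply/mapP; exists i => //; rewrite mem_iota.
  by rewrite /P -rotXS permX -ei; exact: gK.
have lt : find P l < #|{: E * bool}| by rewrite -sl -has_find.
have nthE : forall k, k < #|{: E * bool}| -> nth h l k = (rot ^+ k.+1)%g h.
  by move=> k lk; rewrite (nth_map 0) ?size_iota // nth_iota.
exists (find P l); split => //; last exact: nthE.
split; first by rewrite -nthE //; exact: nth_find.
move=> j ltj; rewrite -nthE; last exact: ltn_trans lt.
by move: (before_find h ltj); rewrite /P /inK => ->.
Qed.

Lemma firsthit_hasK h m : firsthit h m -> hasK h.
Proof. by case=> H _; apply/existsP; exists ((rot ^+ m.+1)%g h); rewrite H ends_rotX eqxx. Qed.

Lemma rot_nextE h m : firsthit h m -> rot_next rot K h = (rot ^+ m.+1)%g h.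
Proof.
move=> fh; have [m0 [_ fh0 ->]] := rot_next_ex (firsthit_hasK fh).
by rewrite (firsthit_uniq fh0 fh).
Qed.

Lemma rot_next_in h : hasK h -> inK (rot_next rot K h).
Proof. by move=> /rot_next_ex [m [_ [H _] ->]]. Qed.

Lemma hasK_rot h : hasK (rot h) = hasK h.
Proof. by apply/existsP/existsP => -[g]; exists g; rewrite ends_rot in p *. Qed.

Lemma hasK_rotV h : hasK ((rot^-1)%g h) = hasK h.
Proof. by rewrite -{2}(permKV rot h) hasK_rot. Qed.

Lemma hasK_in h : inK h -> hasK h.
Proof. by move=> H; apply/existsP; exists h; rewrite H eqxx. Qed.

Lemma rot_next_rot g : hasK g ->
  rot_next rot K g = if inK (rot g) then rot g else rot_next rot K (rot g).
Proof.
move=> /rot_next_ex [m [_ [H1 H2] ->]].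
case: ifP => rK.
  case: m H1 H2 => [|m] H1 H2; first by rewrite expg1.
  by move: (H2 0 (ltn0Sn _)); rewrite expg1 rK.
case: m H1 H2 => [|m] H1 H2; first by move: H1; rewrite expg1 rK.
rewrite (@rot_nextE _ m) ?rotXS //; split; first by rewrite rotXS.
by move=> j ltj; rewrite rotXS; apply: H2.
Qed.

Lemma rot_next_aux g g' m m' : m <= m' -> inK g -> firsthit g' m' ->
  (rot ^+ m.+1)%g g = (rot ^+ m'.+1)%g g' -> g = g'.
Proof.
move=> le gK [_ H2] E1.
have : g = (rot ^+ (m' - m))%g g'.
  apply: (@perm_inj _ (rot ^+ m.+1)%g); rewrite E1 -permM -expgD.
  by rewrite addnS subnK.
case E2: (m' - m) => [|j]; first by rewrite expg0 perm1.
move=> E3; have ltj : j < m' by have := leq_subr m m'; rewrite E2.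
by move: (H2 j ltj); rewrite -E3 gK.
Qed.

Lemma rot_next_inj g g' : inK g -> inK g' -> rot_next rot K g = rot_next rot K g' -> g = g'.
Proof.
move=> gK g'K.
have [m [_ fm ->]] := rot_next_ex (hasK_in gK).
have [m' [_ fm' ->]] := rot_next_ex (hasK_in g'K).
case: (leqP m m') => le E1; first exact: rot_next_aux le gK fm' E1.
by apply/esym; apply: rot_next_aux (ltnW le) g'K fm (esym E1).
Qed.

Notation fs := (face_step rot K).

Lemma inK_flip h : inK (flip h) = inK h.
Proof. by []. Qed.

Lemma fs_in h : inK h -> inK (fs h).
Proof. by move=> H; apply: rot_next_in; apply: hasK_in. Qed.

Lemma flipK : involutive (@flip E).
Proof. by case=> e b; rewrite /flip /= negbK. Qed.

Lemma fs_inj : {in inK &, injective fs}.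
Proof.
by move=> x y xK yK /(@rot_next_inj (flip x) (flip y) xK yK) /(can_inj flipK).
Qed.

Lemma fs_sym x y : inK x -> inK y -> fconnect fs x y = fconnect fs y x.
Proof.
move=> xK yK.
have := (@fconnect_sym_in _ fs inK fs_in fs_inj x y).
by apply.
Qed.

Lemma orbit_fs h : inK h -> [set y | fconnect fs h y] = [set y | fconnect fs (fs h) y].
Proof.
move=> hK; apply/setP => y; rewrite !inE; apply/idP/idP => H.
  by apply: connect_trans H; rewrite fs_sym ?fs_in // fconnect1.
exact: connect_trans (fconnect1 _ h) H.
Qed.

Definition ma (p : (E * bool) * bool) :=
  if p.2 then (rot p.1, false) else ((rot^-1)%g p.1, true).
Definition sm (p : (E * bool) * bool) :=
  if inK p.1 then (flip p.1, ~~ p.2) else (p.1, ~~ p.2).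
Definition Rp : rel ((E * bool) * bool) :=
  fun a b => [|| b == ma a, a == ma b, b == sm a | a == sm b].
Definition key (p : (E * bool) * bool) :=
  if ~~ p.2 && inK p.1 then p.1 else rot_next rot K p.1.
Definition Th (p : (E * bool) * bool) : {set E * bool} + V :=
  if hasK p.1 then inl [set y | fconnect fs (key p) y] else inr (ends p.1).

Lemma key_in p : hasK p.1 -> inK (key p).
Proof. move=> H; rewrite /key; case: ifP => [/andP[] //|_]; exact: rot_next_in. Qed.

Lemma Th_ma p : Th (ma p) = Th p.
Proof.
case: p => g [|]; rewrite /Th /ma /key /=.
  rewrite hasK_rot ends_rot; case: ifP => // hg.
  by rewrite (rot_next_rot hg); case: ifP.
rewrite hasK_rotV ends_rotV; case: ifP => // hg.
rewrite (rot_next_rot _); last by rewrite hasK_rotV.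
by rewrite permKV; case: ifP.
Qed.

Lemma Th_sm p : Th (sm p) = Th p.
Proof.
case: p => g b; rewrite /Th /sm /key /=; case gK: (inK g) => /=.
  rewrite !hasK_in ?inK_flip //; congr inl.
  case: b => /=; rewrite ?inK_flip ?gK /=.
    by rewrite (orbit_fs (h := flip g)) ?inK_flip // /face_step flipK.
  by rewrite (orbit_fs gK).
by rewrite gK !andbF.
Qed.

Lemma Rp_sym : symmetric Rp.
Proof. by move=> a b; rewrite /Rp; apply/idP/idP; case/or4P => ->; rewrite ?orbT. Qed.

Lemma Th_connect a b : connect Rp a b -> Th a = Th b.
Proof.
move/connectP=> [s pth ->]; elim: s a pth => //= c s IH a /andP [r pth].
rewrite -IH //; case/or4P: r => /eqP ->; by rewrite ?Th_ma ?Th_sm.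
Qed.

Lemma step_ma p : connect Rp p (ma p).
Proof. by apply: connect1; rewrite /Rp eqxx. Qed.

Lemma step_sm p : connect Rp p (sm p).
Proof. by apply: connect1; rewrite /Rp eqxx !orbT. Qed.

Lemma walk g : hasK g -> connect Rp (g, true) (rot_next rot K g, false).
Proof.
move=> /rot_next_ex [m [_ [H1 H2] ->]].
suff: forall j, j <= m -> connect Rp (g, true) ((rot ^+ j.+1)%g g, false) by apply.
elim=> [|j IH] lej; first by rewrite expg1; apply: step_ma.
apply: connect_trans (IH (ltnW lej)) _.
have nK := H2 j lej.
apply: connect_trans (step_sm _) _; rewrite /sm /= (negbTE nK) /=.
by apply: connect_trans (step_ma _) _; rewrite /ma /= [in X in connect _ _ X]expgSr permM connect0.
Qed.

Lemma to_key p : hasK p.1 -> connect Rp p (key p, false).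
Proof.
case: p => g [|] /= hg; rewrite /key /=; first exact: walk.
case: ifP => gK; first exact: connect0.
apply: connect_trans (step_sm _) _; rewrite /sm /= gK; exact: walk.
Qed.

Lemma fs_step h : inK h -> connect Rp (h, false) (fs h, false).
Proof.
move=> hK; apply: connect_trans (step_sm _) _; rewrite /sm /= hK.
by apply: walk; apply: hasK_in.
Qed.

Lemma fs_walk h h' : inK h -> fconnect fs h h' -> connect Rp (h, false) (h', false).
Proof.
move=> hK /iter_findex <-; move: (findex _ _ _) => n.
have iK : forall n, inK (iter n fs h) by elim=> //= k IH; apply: fs_in.
elim: n => [|n IH]; first exact: connect0.
by apply: connect_trans IH _; rewrite iterS; apply: fs_step.
Qed.

Lemma hasK_iter n g : hasK (iter n rot g) = hasK g.
Proof. by elim: n => //= n IH; rewrite hasK_rot. Qed.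

Lemma free_local g b b' : ~~ hasK g -> connect Rp (g, b) (g, b').
Proof.
move=> hg; have gK : ~~ inK g by apply: contra hg; apply: hasK_in.
case: (eqVneq b b') => [->|ne]; first exact: connect0.
apply: connect_trans (step_sm _) _; rewrite /sm /= (negbTE gK).
by have -> : ~~ b = b' by case: b b' ne => -[].
Qed.

Lemma free_walk g g' b b' : ~~ hasK g -> ends g = ends g' -> connect Rp (g, b) (g', b').
Proof.
move=> hg eg; have : fconnect rot g g' by rewrite -Hrot eg.
move=> /iter_findex <-; move: (findex _ _ _) => n.
elim: n b' => [|n IH] b'; first exact: free_local.
apply: connect_trans (IH true) _; apply: connect_trans (step_ma _) _.
by rewrite /ma /= -iterS; apply: free_local; rewrite hasK_iter.
Qed.

Lemma connect_Th a b : Th a = Th b -> connect Rp a b.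
Proof.
rewrite /Th; case ha: (hasK a.1); case hb: (hasK b.1) => // -[E1].
  have ck : fconnect fs (key a) (key b).
    have : key b \in [set y | fconnect fs (key b) y] by rewrite inE connect0.
    by rewrite -E1 inE.
  apply: connect_trans (to_key ha) _.
  apply: connect_trans (fs_walk (key_in ha) ck) _.
  by rewrite (sym_connect_sym Rp_sym); apply: to_key.
by case: a b ha hb E1 => [g b] [g' b'] /= ha _ E1; apply: free_walk; rewrite ?ha.
Qed.

Lemma card_Th : #|[set Th p | p : (E * bool) * bool]| + #|[set v : V | [forall h, ends h != v]]|
  = bc ends rot K.
Proof.
set O := [set [set y | fconnect fs x y] | x in [set h : E * bool | h.1 \in K]].
set W := [set v : V | [exists h, ends h == v] && [forall h, inK h ==> (ends h != v)]].
have inl_inj : injective (@inl {set E * bool} V) by move=> x y [].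
have inr_inj : injective (@inr {set E * bool} V) by move=> x y [].
have -> : [set Th p | p : (E * bool) * bool] = inl @: O :|: inr @: W.
  apply/setP => z; apply/imsetP/setUP.
    case=> p _ ->; rewrite /Th; case: ifP => hK.
      left; apply/imsetP; exists [set y | fconnect fs (key p) y] => //.
      by apply/imsetP; exists (key p) => //; rewrite inE; apply: key_in.
    right; apply/imsetP; exists (ends p.1) => //; rewrite inE; apply/andP; split.
      by apply/existsP; exists p.1.
    apply/forallP => h; apply/implyP => hK'; apply/negP => /eqP eh.
    by move/negbT: hK => /existsP; apply; exists h; rewrite hK' eh eqxx.
  case=> [/imsetP [X /imsetP [x xK ->] ->] | /imsetP [v vW ->]].
    rewrite inE in xK; exists (x, false) => //.
    by rewrite /Th /key /= hasK_in //; rewrite /inK xK /=.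
  rewrite inE in vW; case/andP: vW => /existsP [h /eqP eh] /forallP vf.
  exists (h, true) => //; rewrite /Th /= eh; case: ifP => // /existsP [g /andP [gK /eqP eg]].
  by move: (vf g); rewrite gK eg eh eqxx.
rewrite cardsU (_ : _ :&: _ = set0) ?cards0 ?subn0; last first.
  apply/setP => z; rewrite !inE; apply/negbTE/andP => -[/imsetP [? _ e1] /imsetP [? _ e2]].
  by rewrite e1 in e2.
rewrite (card_imset _ inl_inj) (card_imset _ inr_inj) /bc -addnA; congr addn.
rewrite -(cardsID [set v : V | [exists h, ends h == v]] [set v : V | [forall h, (h.1 \in K) ==> (ends h != v)]]).
congr addn; apply: eq_card => v; rewrite !inE; first by rewrite andbC.
rewrite negb_exists; apply/forallP/andP => [H|[/forallP H2 /forallP H1] h].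
  by split; apply/forallP => h; rewrite ?(negbTE (H h)) ?implybT ?H.
by rewrite ?H1 ?H2.
Qed.
End Graph.


Section Labels.
Variables (E : finType) (sgn : E -> bool).

Lemma munlabK x : munlab sgn (mlab sgn x) = x.
Proof.
case: x => e [[|[|[|[|i]]]] Hi] //; rewrite /mlab /munlab /mshift /=;
  case hs: (sgn e); rewrite /= ?hs /=; congr pair; apply: val_inj; rewrite /= inordK //.
Qed.

Lemma mlabK p : mlab sgn (munlab sgn p) = p.
Proof.
case: p => [[e b] s]; rewrite /mlab /munlab /mshift /=;
  case hs: (sgn e); case: b; case: s; rewrite /= ?hs /= inordK //.
Qed.

Definition smP (k : bool) (p : (E * bool) * bool) :=
  if k then (flip p.1, ~~ p.2) else (p.1, ~~ p.2).

Definition trl (fl : bool) (i : 'I_4) : 'I_4 := inord ((i + (if fl then 2 else 0)) %% 4).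

Lemma trlK fl : involutive (trl fl).
Proof.
move=> [[|[|[|[|i]]]] Hi] //; apply: val_inj; case: fl; rewrite /trl /= !inordK //.
Qed.

Lemma mlab_smooth (e : E) fl a i :
  mlab sgn (e, trl fl (smooth_partner a i)) = smP (a == sgn e) (mlab sgn (e, trl fl i)).
Proof.
case: i => [[|[|[|[|i]]]] Hi] //; rewrite /mlab /smP /trl /smooth_partner /mshift /=;
  case hs: (sgn e); case: a; case: fl; rewrite /= ?hs /= !inordK //.
Qed.
End Labels.

Import GRing.Theory.

Lemma card_imset_rel (T U W : finType) (F : T -> U) (G : T -> W) :
  (forall x y, (F x == F y) = (G x == G y)) -> #|[set F x | x : T]| = #|[set G x | x : T]|.
Proof.
move=> FG; case: (pickP T) => [x0 _ | T0]; last first.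
  have e1 : [set F x | x : T] = set0.
    by apply/setP => u; rewrite inE; apply/imsetP => -[x xT]; have := T0 x.
  have e2 : [set G x | x : T] = set0.
    by apply/setP => u; rewrite inE; apply/imsetP => -[x xT]; have := T0 x.
  by rewrite e1 e2 !cards0.
pose H w := if [pick x | G x == w] is Some x then F x else F x0.
have HG : forall x, H (G x) = F x.
  move=> x; rewrite /H; case: pickP => [y /eqP e | /(_ x)]; last by rewrite eqxx.
  by apply/eqP; rewrite FG e.
rewrite -(eq_imset _ HG) (imset_comp H G) card_in_imset //.
move=> _ _ /imsetP [x _ ->] /imsetP [y _ ->]; rewrite !HG => /eqP.
by rewrite FG => /eqP.
Qed.

Lemma connect_map (T U : finType) (r : rel T) (r' : rel U) (f : T -> U) :
  (forall x y, r x y -> r' (f x) (f y)) -> forall x y, connect r x y -> connect r' (f x) (f y).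
Proof.
move=> H x y /connectP [p pth ->]; elim: p x pth => [|z p IH] x /=; first by rewrite connect0.
by case/andP => rxz pth; apply: connect_trans (connect1 (H _ _ rxz)) (IH _ pth).
Qed.



Lemma cls_eq (T : finType) (r : rel T) : symmetric r -> forall x y,
  ([set z | connect r x z] == [set z | connect r y z]) = connect r x y.
Proof.
move=> sr x y; apply/eqP/idP => [E1|cxy].
  have : y \in [set z | connect r y z] by rewrite inE connect0.
  by rewrite -E1 inE.
by apply/setP => z; rewrite !inE (same_connect (sym_connect_sym sr) cxy).
Qed.

Lemma pos_of_fst (E : finType) j (e : E) : (pos_of j e).1.1 = e.
Proof. by case: j => [|[|[|j]]]. Qed.

Lemma mlab_arc (E : finType) (rot : {perm E * bool}) sgn y :
  mlab sgn (medial_arc rot sgn y) = ma rot (mlab sgn y).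
Proof. by rewrite /medial_arc /ma; case: (mlab sgn y) => h [|]; rewrite mlabK. Qed.

Import GRing.Theory.

Section Fexp.
Local Open Scope ring_scope.
Variables (V E : finType) (ends : E * bool -> V) (rot : {perm E * bool}) (sgn : E -> bool).
Variables (R : comUnitRingType) (A B d : R).

Definition wt e (b : bool) : R := if sgn e == b then A else B.

Definition togg (e : E) (f : {ffun E -> bool}) : {ffun E -> bool} :=
  [ffun x => if x == e then ~~ f x else f x].

Lemma toggK e : involutive (togg e).
Proof. by move=> f; apply/ffunP => x; rewrite !ffunE; case: eqP => // _; rewrite negbK. Qed.

Lemma Frec_sum S t : uniq t ->
  Frec ends rot sgn A B d S t =
  \sum_(f : {ffun E -> bool} | [forall e, (e \notin t) ==> f e])
     (\prod_(e <- t) wt e (f e)) * d ^ ((bc ends rot (S :\: [set e | ~~ f e]))%:Z - 1).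
Proof.
elim: t S => [|e t IH] S.
  move=> _ /=; rewrite (big_pred1 [ffun => true]) ?big_nil ?mul1r.
    by congr (_ ^ (_ - _)); congr (_%:Z); congr bc; apply/setP => x; rewrite !inE ffunE /=; case: (x \in S).
  move=> f; apply/forallP/eqP => [H|->]; last by move=> x; rewrite ffunE.
  by apply/ffunP => x; rewrite ffunE; move: (H x).
case/andP => et ut.
have -> : Frec ends rot sgn A B d S (e :: t) =
   wt e false * Frec ends rot sgn A B d (S :\ e) t + wt e true * Frec ends rot sgn A B d S t.
  by rewrite /= /wt; case: (sgn e).
rewrite (bigID (fun f : {ffun E -> bool} => f e)) /= addrC; congr (_ + _).
  rewrite IH // mulr_sumr (reindex_inj (inv_inj (toggK e))) /=.
  apply: eq_big => f.
    apply/forallP/andP => [H|[/forallP H fe] x].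
      have fe : ~~ f e by move: (H e); rewrite (negbTE et) /togg ffunE eqxx.
      split=> //; apply/forallP => x; rewrite in_cons negb_or; apply/implyP => /andP [ne xt].
      by move: (H x); rewrite xt /togg ffunE (negbTE ne).
    rewrite /togg ffunE; case: eqP => [->|/eqP ne]; first by rewrite fe implybT.
    by move: (H x); rewrite in_cons (negbTE ne).
  move=> /forallP H; have fe : ~~ f e by move: (H e); rewrite (negbTE et) /togg ffunE eqxx.
  rewrite big_cons (negbTE fe) mulrA; congr (_ * _ * _).
    apply: eq_big_seq => x xt; rewrite /togg ffunE; case: eqP => // xe.
    by rewrite -xe xt in et.
  congr (_ ^ (_ - _)); congr (_%:Z); congr bc; apply/setP => x; rewrite !inE /togg ffunE.
  by case: eqP => [->|_]; rewrite ?(negbTE fe) //= andbC.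
rewrite IH // mulr_sumr; apply: eq_big => f.
  apply/forallP/andP => [H|[/forallP H fe] x].
    have fe : f e by move: (H e); rewrite (negbTE et).
    split=> //; apply/forallP => x; rewrite in_cons negb_or; apply/implyP => /andP [_ xt].
    by move: (H x); rewrite xt.
  by move: (H x); rewrite in_cons; case: eqP => [->|]; rewrite ?fe ?implybT.
move=> /forallP H; have fe : f e by move: (H e); rewrite (negbTE et).
by rewrite big_cons fe mulrA.
Qed.

Lemma Fpoly_sum : Fpoly ends rot sgn A B d =
  \sum_(f : {ffun E -> bool}) (\prod_(e : E) wt e (f e)) * d ^ ((bc ends rot [set e | f e])%:Z - 1).
Proof.
rewrite /Fpoly Frec_sum ?enum_uniq //; apply: eq_big => f.
  by apply/forallP => x; rewrite mem_enum.
move=> _; rewrite big_enum /=; congr (_ * _ ^ (_ - _)); congr (_%:Z); congr bc.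
by apply/setP => x; rewrite !inE negbK andbT.
Qed.
End Fexp.

Local Open Scope ring_scope.

Theorem proposition4p3
  (V E : finType) (ends : E * bool -> V) (rot : {perm E * bool}) (sgn : E -> bool)
  (Hrot : is_rotation ends rot)
  (C : finType) (arc : C * 'I_4 -> C * 'I_4) (nfree : nat)
  (HD : associated ends rot sgn arc nfree)
  (R : comUnitRingType) (A B d : R) :
  Fpoly ends rot sgn A B d = bracket arc nfree A B d.
Proof.
case: HD => Hn [phi [fl [[phiinv phiK phiK'] Htr]]].
have Htr' : forall x, medial_arc rot sgn (phi x.1, trl (fl x.1) x.2)
   = (phi (arc x).1, trl (fl (arc x).1) (arc x).2) := Htr.
pose Tr (x : C * 'I_4) := mlab sgn (phi x.1, trl (fl x.1) x.2).
pose Trinv (p : (E * bool) * bool) :=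
  let y := munlab sgn p in (phiinv y.1, trl (fl (phiinv y.1)) y.2).
have TrK : cancel Tr Trinv.
  by case=> c i; rewrite /Tr /Trinv munlabK /= phiK trlK.
have TrK' : cancel Trinv Tr.
  move=> p; rewrite /Tr /Trinv; case E1: (munlab sgn p) => [e i] /=.
  by rewrite phiK' trlK -E1 mlabK.
have TrI := can_inj TrK.
have Tr_arc : forall x, Tr (arc x) = ma rot (Tr x).
  by move=> x; rewrite /Tr -Htr' mlab_arc.
pose Gf (f : {ffun E -> bool}) : {ffun C -> bool} := [ffun c => f (phi c) == sgn (phi c)].
pose Hf (s : {ffun C -> bool}) : {ffun E -> bool} := [ffun e => s (phiinv e) == sgn e].
have GfK : cancel Hf Gf.
  by move=> s; apply/ffunP => c; rewrite !ffunE phiK; case: (s c); case: (sgn (phi c)).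
have HfK : cancel Gf Hf.
  by move=> f; apply/ffunP => e; rewrite !ffunE phiK'; case: (f e); case: (sgn e).
rewrite Fpoly_sum /bracket (reindex Gf); last by apply: onW_bij; exists Hf.
apply: eq_bigr => f _.
have -> : \prod_(e : E) wt sgn A B e (f e) = A ^+ #|[set c | Gf f c]| * B ^+ #|[set c | ~~ Gf f c]|.
  rewrite (reindex phi) /=; last by apply: onW_bij; exists phiinv.
  rewrite (bigID (fun c => Gf f c)) /=; congr (_ * _).
    rewrite -prodr_const; apply: eq_big => c; first by rewrite inE.
    by rewrite ffunE /wt eq_sym => ->.
  rewrite -prodr_const; apply: eq_big => c; first by rewrite inE.
  by rewrite ffunE /wt eq_sym => /negbTE ->.
congr (_ * _ ^ (_ - _)); congr (_%:Z).
set K := [set e | f e].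
have Tr_sm : forall x, Tr (x.1, smooth_partner (Gf f x.1) x.2) = sm K (Tr x).
  case=> c i; rewrite /Tr /= mlab_smooth /sm /smP /inK /mlab pos_of_fst inE ffunE.
  by case: (f (phi c)); case: (sgn (phi c)).
have Rel : forall x y, state_rel arc (Gf f) x y = Rp rot K (Tr x) (Tr y).
  move=> x y; rewrite /state_rel /Rp /= -!Tr_arc -!Tr_sm !(inj_eq TrI).
  by rewrite [arc x == y]eq_sym [arc y == x]eq_sym.
have CE : forall x y, connect (state_rel arc (Gf f)) x y = connect (Rp rot K) (Tr x) (Tr y).
  move=> x y; apply/idP/idP.
    by apply: connect_map => a b; rewrite Rel.
  move=> H; rewrite -(TrK x) -(TrK y); apply: (connect_map (f := Trinv) _ H) => a b.
  by rewrite Rel !TrK'.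
have ssym : symmetric (state_rel arc (Gf f)).
  by move=> x y; rewrite /state_rel; apply/idP/idP; case/or4P => ->; rewrite ?orbT.
rewrite /ncurves Hn /medial_nfree -(card_Th Hrot K); congr (_ + _); symmetry.
rewrite (@card_imset_rel _ _ _ _ (fun x => Th ends rot K (Tr x))); last first.
  move=> x y; rewrite cls_eq // CE; apply/idP/eqP; first exact: Th_connect.
  exact: connect_Th.
apply: eq_card => z; apply/imsetP/imsetP => -[x _ ->].
  by exists (Tr x).
by exists (Trinv x) => //; rewrite TrK'.
Qed.
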